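(* For every integer $F\ge 2$, $s(F,F,1)=\dfrac{F(F-1)}{2}$.
   Context: A placement delivery array $S$-PDA$(F,K,Z)$ is an $F\times K$ array $R=(r_{j,k})$, $1\le j\le F$, $1\le k\le K$, over a finite set $S$ such that: (1) each cell is either empty or contains an element of $S$; (2) each column contains exactly $Z$ empty cells; (3) each element of $S$ occurs at most once in each row and at most once in each column; (4) if two distinct nonempty cells satisfy $r_{j_1,k_1}=r_{j_2,k_2}=t\in S$, then the cells $r_{j_1,k_2}$ and $r_{j_2,k_1}$ are empty. For integers $F,K\ge1$, $0\le Z\le F$, define $s(F,K,Z)=\min\{|S| : \text{there exists an } S\text{-PDA}(F,K,Z)\}$. *)

(* Defs.v *)
From mathcomp Require Import all_boot.
Set Implicit Arguments. Unset Strict Implicit. Unset Printing Implicit Defensive.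

(* An F x K array over S: each cell is either empty (None) or holds Some t. *)
Definition array (S : finType) (F K : nat) := 'I_F -> 'I_K -> option S.

Definition is_PDA (S : finType) (F K Z : nat) (R : array S F K) : Prop :=
  (forall k : 'I_K, #|[set j : 'I_F | R j k == None]| = Z) /\
  (forall (j : 'I_F) (k1 k2 : 'I_K) (t : S),
      R j k1 = Some t -> R j k2 = Some t -> k1 = k2) /\
  (forall (j1 j2 : 'I_F) (k : 'I_K) (t : S),
      R j1 k = Some t -> R j2 k = Some t -> j1 = j2) /\
  (forall (j1 j2 : 'I_F) (k1 k2 : 'I_K) (t : S),
      (j1, k1) <> (j2, k2) -> R j1 k1 = Some t -> R j2 k2 = Some t ->
      R j1 k2 = None /\ R j2 k1 = None).

Definition is_s_value (F K Z N : nat) : Prop :=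
  (exists (S : finType) (R : array S F K), @is_PDA S F K Z R /\ #|S| = N) /\
  (forall (S : finType) (R : array S F K), @is_PDA S F K Z R -> N <= #|S|).

(* Main.v *)
Require Import Defs.
From mathcomp Require Import all_boot.

Definition PS (F : nat) := {A : {set 'I_F} | #|A| == 2}.
Definition Rc (F : nat) : array (PS F) F F := fun j k => insub [set j; k].
Arguments Rc {F}.

Lemma Rc_None F (j k : 'I_F) : (Rc j k == None) = (j == k).
Proof.
rewrite /Rc; case: (eqVneq j k) => [->|ne]; case: insubP => [u|] //=;
  rewrite cards2 ?eqxx ?ne //.
Qed.

Lemma Rc_Some F (j k : 'I_F) t : Rc j k = Some t -> val t = [set j; k] /\ j != k.
Proof.
rewrite /Rc; case: insubP => [u|] //; rewrite cards2 => H <- [<-]; split=> //.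
by case: (j != k) H.
Qed.

Lemma Rc_PDA F : is_PDA 1 (@Rc F).
Proof.
split; [|split; [|split]].
- move=> k; rewrite (_ : [set j | Rc j k == None] = [set k]) ?cards1 //.
  by apply/setP=> j; rewrite !inE Rc_None.
- move=> j k1 k2 t /Rc_Some[e1 n1] /Rc_Some[e2 n2].
  have : k1 \in [set j; k2] by rewrite -e2 e1 !inE eqxx orbT.
  by rewrite !inE eq_sym (negPf n1) => /eqP.
- move=> j1 j2 k t /Rc_Some[e1 n1] /Rc_Some[e2 n2].
  have : j1 \in [set j2; k] by rewrite -e2 e1 !inE eqxx.
  by rewrite !inE (negPf n1) orbF => /eqP.
- move=> j1 j2 k1 k2 t ne /Rc_Some[e1 n1] /Rc_Some[e2 n2].
  have h1 : j1 \in [set j2; k2] by rewrite -e2 e1 !inE eqxx.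
  have h2 : k1 \in [set j2; k2] by rewrite -e2 e1 !inE eqxx orbT.
  rewrite !inE in h1 h2.
  case/orP: h1 => /eqP E1.
    subst j2; rewrite (eq_sym k1) (negPf n1) /= in h2.
    by move/eqP: h2 => h2; subst k2; case: ne.
  subst k2; rewrite (eq_sym k1 j1) (negPf n1) orbF in h2; move/eqP: h2 => h2; subst j2.
  by split; apply/eqP; rewrite Rc_None.
Qed.

Lemma card_PS F : #|{: PS F}| = F * (F - 1) %/ 2.
Proof.
rewrite /PS card_sig.
have -> : #|[pred x : {set 'I_F} | #|x| == 2]| = #|[set x : {set 'I_F} | #|x| == 2]|.
  by apply: eq_card => x; rewrite !inE.
by rewrite card_draws card_ord bin2 divn2 subn1.
Qed.

Lemma fiber_le2 (S : finType) F (R : array S F F) : is_PDA 1 R ->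
  forall t, #|[set p : 'I_F * 'I_F | R p.1 p.2 == Some t]| <= 2.
Proof.
move=> [H2 [H3a [H3b H4]]] t.
rewrite leqNgt; apply/negP => big.
set A := [set p : 'I_F * 'I_F | R p.1 p.2 == Some t] in big.
have /card_gt0P [p1 p1A] : 0 < #|A| by apply: leq_trans big.
have big2 : 1 < #|A :\ p1| by move: big; rewrite (cardsD1 p1) p1A add1n ltnS.
have /card_gt0P [p2 p2A] : 0 < #|A :\ p1| by apply: leq_trans big2.
have : 0 < #|A :\ p1 :\ p2| by move: big2; rewrite (cardsD1 p2) p2A add1n ltnS.
move=> /card_gt0P [p3 p3A].
rewrite !inE in p1A p2A p3A; clear big big2.
case: p1 p1A p2A p3A => j1 k1 /= /eqP e1.
case: p2 => j2 k2 /= /andP[n21 /eqP e2].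
case: p3 => j3 k3 /= /andP[n32 /andP[n31 /eqP e3]].
have [a1 _] := H4 j1 j2 k1 k2 t (fun E => ltac:(by rewrite E eqxx in n21)) e1 e2.
have [a3 _] := H4 j3 j2 k3 k2 t (fun E => ltac:(by rewrite E eqxx in n32)) e3 e2.
have nj : j1 != j3.
  apply/eqP => E; subst j3; have E' := H3a _ _ _ _ e1 e3; subst k3.
  by rewrite eqxx in n31.
have : [set j1; j3] \subset [set j | R j k2 == None].
  by apply/subsetP => j; rewrite !inE => /orP[]/eqP->; rewrite ?a1 ?a3.
by move=> /subset_leq_card; rewrite cards2 nj (H2 k2).
Qed.

Lemma count_fibers (S : finType) F (R : array S F F) : is_PDA 1 R ->
  \sum_(t : S) #|[set p : 'I_F * 'I_F | R p.1 p.2 == Some t]| = F * (F - 1).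
Proof.
move=> [H2 _].
under eq_bigr => t _ do rewrite -sum1_card big_mkcond /=.
rewrite exchange_big /=.
transitivity (\sum_(p : 'I_F * 'I_F) (R p.1 p.2 != None : nat)).
  apply: eq_bigr => p _; under eq_bigr => t _ do rewrite inE.
  case: (R p.1 p.2) => [s|] /=.
    rewrite (bigD1 s) //= eqxx big1 // => t nt.
    by case: eqP => // -[E]; rewrite E eqxx in nt.
  by rewrite big1.
rewrite -(pair_big xpredT xpredT (fun j k => (R j k != None : nat))) /=.
rewrite exchange_big /=.
transitivity (\sum_(k < F) (F - 1)); last by rewrite sum_nat_const card_ord.
apply: eq_bigr => k _.
have := cardsC [set j | R j k == None]; rewrite H2 card_ord => E.
rewrite -[in RHS]E addKn -sum1_card big_mkcond /=.
rewrite [RHS]big_mkcond; apply: eq_bigr => j _; rewrite !inE; by case: (R j k).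
Qed.

Lemma lower (S : finType) F (R : array S F F) : is_PDA 1 R ->
  F * (F - 1) %/ 2 <= #|S|.
Proof.
move=> H.
have le : F * (F - 1) <= 2 * #|S|.
  rewrite -(@count_fibers _ _ _ H) mulnC -sum_nat_const.
  by apply: leq_sum => t _; exact: (@fiber_le2 _ _ _ H).
by rewrite -(mulKn #|S| (isT : 0 < 2)) leq_div2r.
Qed.

Theorem mainTheorem5 (F : nat) : 2 <= F -> is_s_value F F 1 (F * (F - 1) %/ 2).
Proof.
move=> _; split.
  by exists (PS F), (@Rc F); split; [exact: Rc_PDA | exact: card_PS].
by move=> S R H; exact: (@lower _ _ _ H).
Qed.
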